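(* Let $\mathcal G$ be a braided stability groupoid, $R$ a ring, $d\in\mathbb N$, and $V$ a $U\mathcal G$-module. The following are equivalent: (a) there are $U\mathcal G$-modules $P_0,P_1$, both freely generated in ranks $\le d$, and an exact sequence $P_1\to P_0\to V\to0$; (b) the canonical map $\mathrm{Lan}_{\mathrm{inc}_d}(V\circ\mathrm{inc}_d)\to V$ is a natural isomorphism, where $\mathrm{inc}_d\colon U\mathcal G^{\le d}\hookrightarrow U\mathcal G$ is the inclusion of the full subcategory on the objects $0,\dots,d$; (c) for all $n>d$ the canonical map $\mathrm{colim}_{m\to n,\,m\le d}V_m\to V_n$ is an isomorphism; (d) for all $n>d$ the canonical map $\mathrm{colim}_{m\to n,\,m<n}V_m\to V_n$ is an isomorphism.
   Context: Stability groupoid: monoidal groupoid $(\mathcal G,\oplus,0)$ with objects $(\mathbb N,+,0)$, $G_n=\mathrm{Aut}(n)$, $\oplus\colon G_m\times G_n\to G_{m+n}$ injective, $G_0$ trivial, $(G_{l+m}\times1)\cap(1\times G_{m+n})=1\times G_m\times1$ in $G_{l+m+n}$; braided: with braiding $b_{m,n}\in G_{m+n}$. $U\mathcal G$: objects $\mathbb N$, $\mathrm{Hom}(m,n)=G_n/G_{n-m}$ for $m\le n$ ($G_{n-m}\subset G_n$ via $g\mapsto g\oplus\mathrm{id}_m$), empty otherwise, composition $fG_l\circ gG_m=f(\mathrm{id}_l\oplus g)G_{l+m}$. A $U\mathcal G$-module is a functor $V\colon U\mathcal G\to R\text{-Mod}$, $V_n=V(n)$; it is freely generated in ranks $\le d$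 if isomorphic to $\bigoplus_jR\mathrm{Hom}(m_j,-)$ with all $m_j\le d$. The colimits in (c) and (d) are taken over the comma categories whose objects are morphisms $m\to n$ in $U\mathcal G$ with $m\le d$ (resp. $m<n$), of the functor $(m\to n)\mapsto V_m$. *)

(* Defs.v *)
From HB Require Import structures.
From mathcomp Require Import all_boot all_algebra.
Set Implicit Arguments. Unset Strict Implicit. Unset Printing Implicit Defensive.
Import GRing.Theory.

Definition tcast (T : nat -> Type) (m n : nat) (e : m = n) (x : T m) : T n :=
  match e in _ = k return T k with erefl => x end.
Arguments tcast T {m n} e x.

(** Data: the groups G_n = Aut(n), the monoidal sum
    (+) : G_m x G_n -> G_(m+n), and the braidings b_(m,n) in G_(m+n).
    Composition in the groupoid is written [gmul f g] (= f o g). *)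
Record GData := {
  grp : nat -> Type;
  gmul : forall n, grp n -> grp n -> grp n;
  gone : forall n, grp n;
  ginv : forall n, grp n -> grp n;
  gsum : forall m n, grp m -> grp n -> grp (m + n);
  braid : forall m n, grp (m + n) }.

Arguments gmul {g n}.
Arguments gone g n : clear implicits.
Arguments ginv {g n}.
Arguments gsum {g m n}.
Arguments braid g m n : clear implicits.

Definition is_bstab (S : GData) : Prop :=
  (forall n (x y z : grp S n), gmul x (gmul y z) = gmul (gmul x y) z) /\
  (forall n (x : grp S n), gmul (gone S n) x = x) /\
  (forall n (x : grp S n), gmul x (gone S n) = x) /\
  (forall n (x : grp S n), gmul (ginv x) x = gone S n) /\
  (forall n (x : grp S n), gmul x (ginv x) = gone S n) /\
  (forall m n (x x' : grp S m) (y y' : grp S n),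
      gsum (gmul x x') (gmul y y') = gmul (gsum x y) (gsum x' y')) /\
  (forall m n, gsum (gone S m) (gone S n) = gone S (m + n)) /\
  (forall l m n (x : grp S l) (y : grp S m) (z : grp S n),
      gsum (gsum x y) z = tcast (grp S) (addnA l m n) (gsum x (gsum y z))) /\
  (forall n (x : grp S n), gsum (gone S 0) x = x) /\
  (forall n (x : grp S n), gsum x (gone S 0) = tcast (grp S) (esym (addn0 n)) x) /\
  (forall m n (x x' : grp S m) (y y' : grp S n),
      gsum x y = gsum x' y' -> x = x' /\ y = y') /\
  (forall x : grp S 0, x = gone S 0) /\
  (* (G_(l+m) x 1) meet (1 x G_(m+n)) = 1 x G_m x 1 in G_(l+m+n)
     (the inclusion "contains" is automatic) *)
  (forall l m n (x : grp S (l + m)) (y : grp S (m + n)),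
      gsum x (gone S n) = tcast (grp S) (addnA l m n) (gsum (gone S l) y) ->
      exists z : grp S m, gsum x (gone S n) = gsum (gsum (gone S l) z) (gone S n)) /\
  (forall m n (x : grp S m) (y : grp S n),
      gmul (braid S m n) (gsum x y)
      = gmul (tcast (grp S) (addnC n m) (gsum y x)) (braid S m n)) /\
  (forall l m n,
      braid S l (m + n)
      = gmul (tcast (grp S) (addnCA m l n) (gsum (gone S m) (braid S l n)))
             (tcast (grp S) (esym (addnA l m n)) (gsum (braid S l m) (gone S n)))) /\
  (forall l m n,
      braid S (l + m) n
      = gmul (tcast (grp S) (addnAC l n m) (gsum (braid S l n) (gone S m)))
             (tcast (grp S) (addnA l m n) (gsum (gone S l) (braid S m n)))).

(** Hom(m,n) = G_n / G_(n-m) for m <= n, where G_(n-m) sits in G_n via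
    h |-> h (+) id_m.  A morphism m -> n is represented by f in G_n.
    [stab H h] is the image of h in G_n, [lift H g] = id_(n-m) (+) g. *)
Definition stab (S : GData) (m n : nat) (H : (m <= n)%N) (h : grp S (n - m))
  : grp S n := tcast (grp S) (subnK H) (gsum h (gone S m)).

Definition lift (S : GData) (m n : nat) (H : (m <= n)%N) (g : grp S m)
  : grp S n := tcast (grp S) (subnK H) (gsum (gone S (n - m)) g).

(** Composition: (f G_(n-m)) o (g G_(m-k)) = f (id_(n-m) (+) g) G_(n-k). *)

(** [act m n H f] is V(f G_(n-m)) : V_m -> V_n. *)
Record UGmod (S : GData) (R : pzRingType) := {
  ev : nat -> lmodType R;
  act : forall m n, (m <= n)%N -> grp S n -> ev m -> ev n }.

Arguments ev {S R}.
Arguments act {S R} u {m n}.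

Definition is_UGmod S R (V : UGmod S R) : Prop :=
  (forall m n (H : (m <= n)%N) f (a : R) (u v : ev V m),
      act V H f (a *: u + v)%R = (a *: act V H f u + act V H f v)%R) /\
  (forall m n (H : (m <= n)%N) f (h : grp S (n - m)) (v : ev V m),
      act V H (gmul f (stab H h)) v = act V H f v) /\
  (forall n (H : (n <= n)%N) (v : ev V n), act V H (gone S n) v = v) /\
  (forall k m n (Hkm : (k <= m)%N) (Hmn : (m <= n)%N) (Hkn : (k <= n)%N)
          (f : grp S n) (g : grp S m) (v : ev V k),
      act V Hmn f (act V Hkm g v) = act V Hkn (gmul f (lift Hmn g)) v).

Definition is_hom S R (V W : UGmod S R) (t : forall n, ev V n -> ev W n) : Prop :=
  (forall n (a : R) (u v : ev V n), t n (a *: u + v)%R = (a *: t n u + t n v)%R) /\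
  (forall m n (H : (m <= n)%N) f (v : ev V m),
      t n (act V H f v) = act W H f (t m v)).
Arguments is_hom {S R} V W t.

(** Natural transformations V o inc_d -> W o inc_d, where inc_d is the
    inclusion of the full subcategory of UG on 0..d (values of [t] at
    n > d are irrelevant). *)
Definition is_hom_le S R (d : nat) (V W : UGmod S R)
  (t : forall n, ev V n -> ev W n) : Prop :=
  (forall n, (n <= d)%N -> forall (a : R) (u v : ev V n),
      t n (a *: u + v)%R = (a *: t n u + t n v)%R) /\
  (forall m n (H : (m <= n)%N) f (v : ev V m), (n <= d)%N ->
      t n (act V H f v) = act W H f (t m v)).
Arguments is_hom_le {S R} d V W t.

(** P is freely generated in ranks <= d, i.e. P is isomorphic to
    (+)_j R Hom(m_j, -) with all m_j <= d.  Expressed through the defining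
    universal property of (+)_j R Hom(m_j,-): P is the free UG-module on
    elements x_j in P_(m_j). *)
Definition free_le S R (d : nat) (P : UGmod S R) : Prop :=
  exists (J : Type) (mj : J -> nat) (x : forall j, ev P (mj j)),
    (forall j, (mj j <= d)%N) /\
    forall W : UGmod S R, is_UGmod W ->
    forall w : forall j, ev W (mj j),
      exists t : forall n, ev P n -> ev W n,
        is_hom P W t /\ (forall j, t (mj j) (x j) = w j) /\
        forall t' : forall n, ev P n -> ev W n,
          is_hom P W t' -> (forall j, t' (mj j) (x j) = w j) ->
          forall n p, t' n p = t n p.

Definition condA S R (d : nat) (V : UGmod S R) : Prop :=
  exists P0 P1 : UGmod S R,
    is_UGmod P0 /\ is_UGmod P1 /\ free_le d P0 /\ free_le d P1 /\
    exists (al : forall n, ev P1 n -> ev P0 n) (be : forall n, ev P0 n -> ev V n),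
      is_hom P1 P0 al /\ is_hom P0 V be /\
      (forall n (v : ev V n), exists p, be n p = v) /\
      (forall n (p : ev P0 n), be n p = 0%R <-> exists q, al n q = p).

(** (b): the canonical map Lan_(inc_d)(V o inc_d) -> V is an isomorphism,
    i.e. (V, id : V o inc_d -> V o inc_d) is a left Kan extension of
    V o inc_d along inc_d. *)
Definition condB S R (d : nat) (V : UGmod S R) : Prop :=
  forall W : UGmod S R, is_UGmod W ->
  forall t : forall n, ev V n -> ev W n, is_hom_le d V W t ->
    exists s : forall n, ev V n -> ev W n,
      is_hom V W s /\ (forall n, (n <= d)%N -> forall v, s n v = t n v) /\
      forall s' : forall n, ev V n -> ev W n,
        is_hom V W s' -> (forall n, (n <= d)%N -> forall v, s' n v = t n v) ->
        forall n v, s' n v = s n v.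

(** [colim_at Pm V n]: the canonical map colim_{phi : m -> n, Pm m} V_m -> V_n
    is an isomorphism, i.e. the cocone (V(phi))_phi is a colimit of the
    functor (phi : m -> n) |-> V_m on the comma category of morphisms
    m -> n with Pm m.  Objects are cosets f G_(n-m) (f in G_n); a morphism
    (m,[f]) -> (m',[f']) is [g] : m -> m' with [f'] o [g] = [f]. *)
Definition colim_at S R (Pm : nat -> bool) (V : UGmod S R) (n : nat) : Prop :=
  forall (W : lmodType R)
         (psi : forall m, (m <= n)%N -> grp S n -> ev V m -> W),
    (forall m (H : (m <= n)%N) f (a : R) (u v : ev V m), Pm m ->
        psi m H f (a *: u + v)%R = (a *: psi m H f u + psi m H f v)%R) ->
    (forall m (H : (m <= n)%N) f (h : grp S (n - m)) (v : ev V m), Pm m ->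
        psi m H (gmul f (stab H h)) v = psi m H f v) ->
    (forall m m' (H : (m <= n)%N) (H' : (m' <= n)%N) (Hmm : (m <= m')%N)
            (f f' : grp S n) (g : grp S m') (v : ev V m), Pm m -> Pm m' ->
        (exists h : grp S (n - m), gmul f' (lift H' g) = gmul f (stab H h)) ->
        psi m' H' f' (act V Hmm g v) = psi m H f v) ->
    exists u : ev V n -> W,
      (forall (a : R) (x y : ev V n), u (a *: x + y)%R = (a *: u x + u y)%R) /\
      (forall m (H : (m <= n)%N) f (v : ev V m), Pm m -> u (act V H f v) = psi m H f v) /\
      forall u' : ev V n -> W,
        (forall (a : R) (x y : ev V n), u' (a *: x + y)%R = (a *: u' x + u' y)%R) ->
        (forall m (H : (m <= n)%N) f (v : ev V m), Pm m -> u' (act V H f v) = psi m H f v) ->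
        forall x, u' x = u x.

Definition condC S R (d : nat) (V : UGmod S R) : Prop :=
  forall n, (d < n)%N -> colim_at (fun m => (m <= d)%N) V n.

Definition condD S R (d : nat) (V : UGmod S R) : Prop :=
  forall n, (d < n)%N -> colim_at (fun m => (m < n)%N) V n.

(* Main.v *)
Require Import Defs.
From HB Require Import structures.
From mathcomp Require Import all_boot all_algebra.
From mathcomp Require Import boolp.
From mathcomp Require Import finmap.
From mathcomp.multinomials Require Import monalg.
From Stdlib Require Import Eqdep_dec PeanoNat Lia ClassicalEpsilon.
From mathcomp Require Import zify.
Set Implicit Arguments. Unset Strict Implicit. Unset Printing Implicit Defensive.
Import GRing.Theory.

Notation lift := Defs.lift.
Notation tcast := Defs.tcast.
Notation stab := Defs.stab.

Module Part1.
Local Open Scope ring_scope.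

Lemma xxx0 (M : zmodType) (x : M) : x = x + x -> x = 0.
Proof. by move=> /esym/(congr1 (fun y => y - x)); rewrite addrK subrr. Qed.

Section FS.
Context (K : choiceType) (R : pzRingType).

Definition fsscale (c : R) (g : {malg R[K]}) : {malg R[K]} :=
  \sum_(k <- msupp g) << c * g@_k *g k >>.

Lemma fsscaleE c g k : (fsscale c g)@_k = c * g@_k.
Proof.
rewrite {2}[g]monalgE !raddf_sum mulr_sumr.
by apply/eq_bigr=> /= i _; rewrite !mcoeffU mulrnAr.
Qed.

Lemma fsscaleA c1 c2 g : fsscale c1 (fsscale c2 g) = fsscale (c1 * c2) g.
Proof. by apply/malgP=> x; rewrite !fsscaleE mulrA. Qed.
Lemma fsscale1r g : fsscale 1 g = g.
Proof. by apply/malgP=> k; rewrite !fsscaleE mul1r. Qed.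
Lemma fsscaleDr c g1 g2 : fsscale c (g1 + g2) = fsscale c g1 + fsscale c g2.
Proof. by apply/malgP=> k; rewrite !(mcoeffD, fsscaleE) mulrDr. Qed.
Lemma fsscaleDl g c1 c2: fsscale (c1 + c2) g = fsscale c1 g + fsscale c2 g.
Proof. by apply/malgP=> x; rewrite !(mcoeffD, fsscaleE) mulrDl. Qed.

Definition FS := malg K R.
HB.instance Definition _ := GRing.Zmodule.on FS.
HB.instance Definition _ := GRing.Zmodule_isLmodule.Build R FS
  fsscaleA fsscale1r fsscaleDr fsscaleDl.

Definition dlt (k : K) : FS := << k >>.

Lemma FS_coefZ c (g : FS) k : (c *: g)@_k = c * g@_k.
Proof. exact: fsscaleE. Qed.

Lemma FS_decomp (g : FS) : g = \sum_(k <- msupp g) g@_k *: dlt k.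
Proof.
rewrite {1}[g]monalgE; apply: eq_bigr => k _; apply/malgP=> k'.
by rewrite FS_coefZ !mcoeffU mulrnAr mulr1.
Qed.

Definition ext (W : lmodType R) (x : K -> W) (g : FS) : W :=
  \sum_(k <- msupp g) g@_k *: x k.

Lemma ext_incl (W : lmodType R) (x : K -> W) (g : FS) (D : {fset K}) :
  (msupp g `<=` D)%fset -> ext x g = \sum_(k <- D) g@_k *: x k.
Proof.
move=> sD; rewrite /ext; apply: big_fset_incl => // k _ kn.
by rewrite mcoeff_outdom // scale0r.
Qed.

Lemma ext_lin (W : lmodType R) (x : K -> W) a (g h : FS) :
  ext x (a *: g + h) = a *: ext x g + ext x h.
Proof.
set D := (msupp g `|` msupp h `|` msupp (a *: g + h))%fset.
have sg : (msupp g `<=` D)%fset by rewrite /D -fsetUA fsubsetUl.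
have sh : (msupp h `<=` D)%fset by rewrite /D fsetUC fsetUA fsubsetUr.
have sgh : (msupp (a *: g + h) `<=` D)%fset by rewrite /D fsubsetUr.
rewrite (ext_incl x sg) (ext_incl x sh) (ext_incl x sgh).
rewrite scaler_sumr -big_split /=; apply: eq_bigr => k _.
by rewrite mcoeffD FS_coefZ scalerDl scalerA.
Qed.

Lemma ext_dlt (W : lmodType R) (x : K -> W) k : ext x (dlt k) = x k.
Proof.
rewrite /ext /dlt msuppU; case: eqP => [e|_].
  by rewrite big_seq_fset0 -[x k]scale1r e scale0r.
by rewrite big_seq_fset1 mcoeffUU scale1r.
Qed.

Lemma FS_uniq (W : lmodType R) (L1 L2 : FS -> W) :
  (forall a u v, L1 (a *: u + v) = a *: L1 u + L1 v) ->
  (forall a u v, L2 (a *: u + v) = a *: L2 u + L2 v) ->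
  (forall k, L1 (dlt k) = L2 (dlt k)) -> forall g, L1 g = L2 g.
Proof.
move=> h1 h2 e g; rewrite (FS_decomp g) /=.
elim: (enum_fset (msupp g)) => [|k s IH].
  rewrite !big_nil.
  have z1 : L1 0 = 0 by apply: xxx0; have := h1 1 0 0; rewrite scaler0 addr0 scale1r.
  have z2 : L2 0 = 0 by apply: xxx0; have := h2 1 0 0; rewrite scaler0 addr0 scale1r.
  by rewrite z1 z2.
by rewrite !big_cons h1 h2 e IH.
Qed.

End FS.
Arguments dlt {K R} k.

End Part1.
Import Part1.

Module Part2.
Local Open Scope ring_scope.

Record subm (R : pzRingType) (X : lmodType R) := Subm {
  sM : X -> Prop; sM0 : sM 0; sMlin : forall a x y, sM x -> sM y -> sM (a *: x + y) }.

Section Quot.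
Context (R : pzRingType) (X : lmodType R) (Ms : subm X).
Local Notation M := (sM Ms).
Let M0 := sM0 Ms.
Let Mlin := @sMlin _ _ Ms.

Lemma MD x y : M x -> M y -> M (x + y).
Proof. by move=> hx hy; have := Mlin 1 hx hy; rewrite scale1r. Qed.
Lemma MN x : M x -> M (- x).
Proof. by move=> hx; have := Mlin (-1) hx M0; rewrite addr0 scaleN1r. Qed.
Lemma MZ a x : M x -> M (a *: x).
Proof. by move=> hx; have := Mlin a hx M0; rewrite addr0. Qed.

Definition cls (x : X) : X -> Prop := fun y => M (y - x).

Lemma cls_eq x y : cls x = cls y <-> M (x - y).
Proof.
split=> [e|h].
  have : cls x x by rewrite /cls subrr.
  by rewrite e.
apply/funext => z; apply/propext; rewrite /cls; split=> hz.
  by have := MD hz h; rewrite addrA subrK.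
by have := MD hz (MN h); rewrite opprB addrA subrK.
Qed.

Record quot := Quot { qset : X -> Prop; qex : exists x, qset = cls x }.

HB.instance Definition _ := gen_eqMixin quot.
HB.instance Definition _ := gen_choiceMixin quot.

Definition qpi (x : X) : quot := @Quot (cls x) (ex_intro _ x erefl).

Definition qrep (q : quot) : X := projT1 (cid (qex q)).

Lemma qrepK q : qpi (qrep q) = q.
Proof.
rewrite /qpi /qrep; case: q => s ex /=; case: (cid ex) => x /= e.
move: ex; rewrite e => ex; congr Quot; exact: Prop_irrelevance.
Qed.

Lemma qpi_eq x y : qpi x = qpi y <-> M (x - y).
Proof.
split=> [e|h]; first by apply/cls_eq; exact: (congr1 qset e).
by rewrite /qpi; move: (ex_intro _ x _) (ex_intro _ y _); rewrite (proj2 (cls_eq x y) h) => ? ?; congr Quot; exact: Prop_irrelevance.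
Qed.

Lemma qrep_pi x : M (qrep (qpi x) - x).
Proof. by apply/qpi_eq; rewrite qrepK. Qed.

Definition qadd q1 q2 := qpi (qrep q1 + qrep q2).
Definition qopp q := qpi (- qrep q).
Definition qzero := qpi 0.
Definition qscale a q := qpi (a *: qrep q).

Lemma qaddE x y : qadd (qpi x) (qpi y) = qpi (x + y).
Proof.
apply/qpi_eq; have := MD (qrep_pi x) (qrep_pi y).
by rewrite opprD addrACA.
Qed.
Lemma qoppE x : qopp (qpi x) = qpi (- x).
Proof. by apply/qpi_eq; have := MN (qrep_pi x); rewrite opprB opprK addrC. Qed.
Lemma qscaleE a x : qscale a (qpi x) = qpi (a *: x).
Proof. by apply/qpi_eq; have := MZ a (qrep_pi x); rewrite scalerBr. Qed.

Lemma qind (P : quot -> Prop) : (forall x, P (qpi x)) -> forall q, P q.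
Proof. by move=> h q; rewrite -(qrepK q). Qed.

Lemma qaddA : associative qadd.
Proof. by elim/qind=> x; elim/qind=> y; elim/qind=> z; rewrite !qaddE addrA. Qed.
Lemma qaddC : commutative qadd.
Proof. by elim/qind=> x; elim/qind=> y; rewrite !qaddE addrC. Qed.
Lemma qadd0 : left_id qzero qadd.
Proof. by elim/qind=> x; rewrite qaddE add0r. Qed.
Lemma qaddN : left_inverse qzero qopp qadd.
Proof. by elim/qind=> x; rewrite qoppE qaddE addNr. Qed.

HB.instance Definition _ := GRing.isZmodule.Build quot qaddA qaddC qadd0 qaddN.

Lemma qscaleA a b q : qscale a (qscale b q) = qscale (a * b) q.
Proof. by elim/qind: q => x; rewrite !qscaleE scalerA. Qed.
Lemma qscale1 q : qscale 1 q = q.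
Proof. by elim/qind: q => x; rewrite !qscaleE scale1r. Qed.
Lemma qscaleDr a q1 q2 : qscale a (qadd q1 q2) = qadd (qscale a q1) (qscale a q2).
Proof. by elim/qind: q1 => x; elim/qind: q2 => y; rewrite !(qscaleE, qaddE) scalerDr. Qed.
Lemma qscaleDl q a b : qscale (a + b) q = qadd (qscale a q) (qscale b q).
Proof. by elim/qind: q => x; rewrite !(qscaleE, qaddE) scalerDl. Qed.

HB.instance Definition _ := GRing.Zmodule_isLmodule.Build R quot
  qscaleA qscale1 qscaleDr qscaleDl.

Lemma qpi_lin a x y : qpi (a *: x + y) = a *: qpi x + qpi y.
Proof. by rewrite -[RHS]/(qadd (qscale a (qpi x)) (qpi y)) qscaleE qaddE. Qed.

Lemma qpi0 x : qpi x = 0 <-> M x.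
Proof. by rewrite -[0]/(qpi 0) qpi_eq subr0. Qed.

End Quot.

End Part2.
Import Part2.

Module Part3.


Section Grp.
Context (S : GData) (HS : is_bstab S).
Local Notation G := (grp S).


Lemma mulA n (x y z : G n) : gmul x (gmul y z) = gmul (gmul x y) z.
Proof. by case: HS. Qed.
Lemma mul1g n (x : G n) : gmul (gone S n) x = x.
Proof. by case: HS => _ []. Qed.
Lemma mulg1 n (x : G n) : gmul x (gone S n) = x.
Proof. by case: HS => _ [] _ []. Qed.
Lemma mulVg n (x : G n) : gmul (ginv x) x = gone S n.
Proof. by case: HS => _ [] _ [] _ []. Qed.
Lemma mulgV n (x : G n) : gmul x (ginv x) = gone S n.
Proof. by case: HS => _ [] _ [] _ [] _ []. Qed.
Lemma sum_mul m n (x x' : G m) (y y' : G n) :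
  gsum (gmul x x') (gmul y y') = gmul (gsum x y) (gsum x' y').
Proof. by case: HS => _ [] _ [] _ [] _ [] _ []. Qed.
Lemma sum_one m n : gsum (gone S m) (gone S n) = gone S (m + n).
Proof. by case: HS => _ [] _ [] _ [] _ [] _ [] _ []. Qed.
Lemma sum_assoc l m n (x : G l) (y : G m) (z : G n) :
  gsum (gsum x y) z = tcast G (addnA l m n) (gsum x (gsum y z)).
Proof. by case: HS => _ [] _ [] _ [] _ [] _ [] _ [] _ []. Qed.
Lemma sum_one0 n (x : G n) : gsum (gone S 0) x = x.
Proof. by case: HS => _ [] _ [] _ [] _ [] _ [] _ [] _ [] _ []. Qed.
Lemma G0_triv (x : G 0) : x = gone S 0.
Proof. by case: HS => _ [] _ [] _ [] _ [] _ [] _ [] _ [] _ [] _ [] _ [] _ [] ? _. Qed.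

Lemma tc_mul a b (e : a = b) (x y : G a) :
  tcast G e (gmul x y) = gmul (tcast G e x) (tcast G e y).
Proof. by case: b / e. Qed.
Lemma tc_one a b (e : a = b) : tcast G e (gone S a) = gone S b.
Proof. by case: b / e. Qed.

Definition sg a (x : G a) : {a : nat & G a} := existT _ a x.
Lemma sg_tc a b (e : a = b) (x : G a) : sg (tcast G e x) = sg x.
Proof. by case: b / e. Qed.
Lemma sg_inj a (x y : G a) : sg x = sg y -> x = y.
Proof. exact: (inj_pair2_eq_dec _ Nat.eq_dec). Qed.
Lemma sg_one a b : a = b -> sg (gone S a) = sg (gone S b).
Proof. by move=> ->. Qed.
Lemma sg_eq a b (x : G a) (y : G b) : sg x = sg y -> exists e : a = b, tcast G e x = y.
Proof.
move=> E; have ea : a = b := f_equal (@projT1 _ _) E.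
move: y E; case: b / ea => y E; exists erefl; exact: sg_inj.
Qed.
Lemma sg_sum a a' b b' (x : G a) (x' : G a') (y : G b) (y' : G b') :
  sg x = sg x' -> sg y = sg y' -> sg (gsum x y) = sg (gsum x' y').
Proof.
move=> /sg_eq [e ex] /sg_eq [f ey]; subst x' y'; case: a' / e; case: b' / f; done.
Qed.
Lemma sg_assoc l m n (x : G l) (y : G m) (z : G n) :
  sg (gsum (gsum x y) z) = sg (gsum x (gsum y z)).
Proof. by rewrite sum_assoc sg_tc. Qed.

Lemma mul_cancel_l n (a x y : G n) : gmul a x = gmul a y -> x = y.
Proof.
move=> e; rewrite -(mul1g x) -(mul1g y) -(mulVg a) -!mulA; congr gmul; exact e.
Qed.

Lemma lift_mul m n (H : m <= n) (g1 g2 : G m) :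
  lift H (gmul g1 g2) = gmul (lift H g1) (lift H g2).
Proof. by rewrite /lift -tc_mul -sum_mul mul1g. Qed.
Lemma lift_one m n (H : m <= n) : lift H (gone S m) = gone S n.
Proof. by rewrite /lift sum_one tc_one. Qed.
Lemma stab_mul m n (H : m <= n) (h1 h2 : G (n - m)) :
  stab H (gmul h1 h2) = gmul (stab H h1) (stab H h2).
Proof. by rewrite /stab -tc_mul -sum_mul mul1g. Qed.
Lemma stab_one m n (H : m <= n) : stab H (gone S (n - m)) = gone S n.
Proof. by rewrite /stab sum_one tc_one. Qed.
Lemma stab_inv m n (H : m <= n) (h : G (n - m)) :
  stab H (ginv h) = ginv (stab H h).
Proof.
apply: (@mul_cancel_l _ (stab H h)); rewrite -stab_mul !mulgV; exact: stab_one.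
Qed.
Lemma sg_lift m n (H : m <= n) g : sg (lift H g) = sg (gsum (gone S (n - m)) g).
Proof. exact: sg_tc. Qed.
Lemma sg_stab m n (H : m <= n) h : sg (stab H h) = sg (gsum h (gone S m)).
Proof. exact: sg_tc. Qed.

Lemma lift_lift k m n (Hkm : k <= m) (Hmn : m <= n) (Hkn : k <= n) (g : G k) :
  lift Hmn (lift Hkm g) = lift Hkn g.
Proof.
apply: sg_inj; rewrite sg_lift (sg_sum (erefl _) (sg_lift _ _)) -sg_assoc sum_one sg_lift.
apply: sg_sum (erefl _); apply: sg_one; lia.
Qed.

Lemma lift_id n (H : n <= n) (g : G n) : lift H g = g.
Proof.
apply: sg_inj; rewrite sg_lift.
rewrite (sg_sum (sg_one (_ : n - n = 0)) (erefl _)) ?subnn // sum_one0 //.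
Qed.

Lemma stab_nn n (H : n <= n) (h : G (n - n)) : stab H h = gone S n.
Proof.
apply: sg_inj; rewrite sg_stab.
have h0 : forall a (ea : a = 0) (x : G a), sg x = sg (gone S 0).
  by move=> a ea; subst a => x; rewrite (G0_triv x).
rewrite (sg_sum (h0 _ (subnn n) h) (erefl _)) sum_one0 //.
Qed.

Lemma stab_lift_comm m n (H : m <= n) (h : G (n - m)) (g : G m) :
  gmul (stab H h) (lift H g) = gmul (lift H g) (stab H h).
Proof. by rewrite /stab /lift -!tc_mul -!sum_mul !mul1g !mulg1. Qed.

Lemma lift_stab k m n (Hkm : k <= m) (Hmn : m <= n) (Hkn : k <= n) (h : G (m - k)) :
  exists h', lift Hmn (stab Hkm h) = stab Hkn h'.
Proof.
have e : n - m + (m - k) = n - k by lia.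
exists (tcast G e (gsum (gone S (n - m)) h)).
apply: sg_inj; rewrite sg_lift sg_stab (sg_sum (erefl _) (sg_stab _ _)).
by rewrite -sg_assoc; apply: sg_sum (erefl _); rewrite sg_tc.
Qed.

Lemma stab_stab k m n (Hkm : k <= m) (Hmn : m <= n) (Hkn : k <= n) (h : G (n - m)) :
  exists h', stab Hmn h = stab Hkn h'.
Proof.
have e : n - m + (m - k) = n - k by lia.
exists (tcast G e (gsum h (gone S (m - k)))).
apply: sg_inj; rewrite !sg_stab (sg_sum (sg_tc _ _) (erefl _)) sg_assoc sum_one.
by apply: sg_sum (erefl _) _; apply: sg_one; lia.
Qed.

Lemma cosetA k m n (Hkm : k <= m) (Hmn : m <= n) (Hkn : k <= n)
  (f : G n) (h : G (n - m)) (g : G m) :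
  exists h', gmul (gmul f (stab Hmn h)) (lift Hmn g)
             = gmul (gmul f (lift Hmn g)) (stab Hkn h').
Proof.
have [h' e] := stab_stab Hkm Hmn Hkn h; exists h'.
by rewrite -!mulA stab_lift_comm e.
Qed.

Lemma cosetB k m n (Hkm : k <= m) (Hmn : m <= n) (Hkn : k <= n)
  (g : G m) (h : G (m - k)) :
  exists h', lift Hmn (gmul g (stab Hkm h)) = gmul (lift Hmn g) (stab Hkn h').
Proof.
have [h' e] := lift_stab Hkm Hmn Hkn h; exists h'.
by rewrite lift_mul e.
Qed.

End Grp.

End Part3.
Import Part3.

Module Part4.


Definition lin (R : pzRingType) (U W : lmodType R) (f : U -> W) :=
  forall a u v, f (a *: u + v)%R = (a *: f u + f v)%R.

Section LinBasics.
Context (R : pzRingType) (U W : lmodType R) (f : U -> W) (hf : lin f).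
Local Open Scope ring_scope.
Lemma lin0 : f 0 = 0.
Proof.
have := hf 1 0 0; rewrite scaler0 addr0 scale1r.
by move=> /esym/(congr1 (fun y => y - f 0)); rewrite addrK subrr.
Qed.
Lemma linD u v : f (u + v) = f u + f v.
Proof. by have := hf 1 u v; rewrite !scale1r. Qed.
Lemma linZ a u : f (a *: u) = a *: f u.
Proof. by have := hf a u 0; rewrite !addr0 lin0 addr0. Qed.
Lemma linN u : f (- u) = - f u.
Proof. by rewrite -scaleN1r linZ scaleN1r. Qed.
Lemma linB u v : f (u - v) = f u - f v.
Proof. by rewrite linD linN. Qed.
End LinBasics.

Lemma lin_comp (R : pzRingType) (U W Y : lmodType R) (f : U -> W) (g : W -> Y) :
  lin f -> lin g -> lin (g \o f).
Proof. by move=> hf hg a u v /=; rewrite hf hg. Qed.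

Section Mods.
Context (S : GData) (HS : is_bstab S) (R : pzRingType).
Local Notation G := (grp S).

Section OneMod.
Context (V : UGmod S R) (HV : is_UGmod V).
Lemma actL m n (H : m <= n) f : lin (act V H f).
Proof. by case: HV => h _ a u v; apply: h. Qed.
Lemma actI m n (H : m <= n) f h v : act V H (gmul f (stab H h)) v = act V H f v.
Proof. by case: HV => _ [hh _]; apply: hh. Qed.
Lemma act1 n (H : n <= n) v : act V H (gone S n) v = v.
Proof. by case: HV => _ [_ [h _]]; apply: h. Qed.
Lemma actC k m n (Hkm : k <= m) (Hmn : m <= n) (Hkn : k <= n) f g v :
  act V Hmn f (act V Hkm g v) = act V Hkn (gmul f (lift Hmn g)) v.
Proof. by case: HV => _ [_ [_ h]]; apply: h. Qed.
Lemma act_irr m n (H H' : m <= n) f v : act V H f v = act V H' f v.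
Proof. by rewrite (eq_irrelevance H H'). Qed.

Lemma colim_uniq Pm n (C : colim_at Pm V n) (W : lmodType R) (L1 L2 : ev V n -> W) :
  lin L1 -> lin L2 ->
  (forall m (H : m <= n) f v, Pm m -> L1 (act V H f v) = L2 (act V H f v)) ->
  forall x, L1 x = L2 x.
Proof.
move=> h1 h2 e.
have [|||u [lu [hu uu]]] := C W (fun m H f v => L1 (act V H f v)).
- by move=> m H f a x y _; rewrite (actL H f) h1.
- by move=> m H f h v _; rewrite actI.
- move=> m m' H H' Hmm f f' g v _ _ [h eh].
  by rewrite (actC Hmm H' H) eh actI.
move=> x; rewrite (uu L1 h1) // (uu L2 h2) // => m H f v pm; by rewrite e.
Qed.
End OneMod.

Section WithD.
Context (V : UGmod S R) (HV : is_UGmod V) (d : nat).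

Lemma CtoB : condC d V -> condB d V.
Proof.
move=> C W HW t [tl tn].
pose Q n (u : ev V n -> ev W n) :=
  [/\ (n <= d -> forall v, u v = t n v), lin u &
      (d < n -> forall m (H : m <= n) f v, m <= d -> u (act V H f v) = act W H f (t m v))].
have ex n : exists u, Q n u.
  case: (leqP n d) => nd.
    exists (t n); split=> //; first exact: tl.
    by move=> dn; lia.
  have [|||u [lu [hu _]]] := C n nd (ev W n) (fun m H f v => act W H f (t m v)).
  - by move=> m H f a x y md; rewrite tl // (actL HW).
  - by move=> m H f h v _; rewrite (actI HW).
  - move=> m m' H H' Hmm f f' g v md m'd [h eh].
    by rewrite tn // (actC HW Hmm H' H) eh (actI HW).
  exists u; split=> //.
  by move=> dn; lia.
pose s n := proj1_sig (cid (ex n)).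
have sQ n : Q n (s n) by rewrite /s; case: (cid _).
have sd n : n <= d -> forall v, s n v = t n v by case: (sQ n).
have sl n : lin (s n) by case: (sQ n).
have sg n : d < n -> forall m (H : m <= n) f v, m <= d -> s n (act V H f v) = act W H f (t m v).
  by case: (sQ n).
exists s; split; [split|split].
- by move=> n a u v; apply: sl.
- move=> m n H f v.
  case: (leqP n d) => nd.
    have md : m <= d by apply: leq_trans nd.
    by rewrite !sd // tn.
  case: (leqP m d) => md; first by rewrite sg // sd.
  apply: (colim_uniq HV (C m md) (L1 := fun v => s n (act V H f v))
                     (L2 := fun v => act W H f (s m v))).
  + exact: lin_comp (actL HV H f) (sl n).
  + exact: lin_comp (sl m) (actL HW H f).
  move=> m' H' f' v' m'd /=.
  have Hm'n : m' <= n by apply: leq_trans H.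
  by rewrite (actC HV H' H Hm'n) /= sg // sg // (actC HW H' H Hm'n).
- exact: sd.
move=> s' [s'l s'n] s'd n v.
case: (leqP n d) => nd; first by rewrite sd // s'd.
apply: (colim_uniq HV (C n nd)) v.
- by move=> a x y; apply: s'l.
- exact: sl.
by move=> m H f v md; rewrite s'n s'd // sg.
Qed.


Lemma CtoD : condC d V -> condD d V.
Proof.
move=> C n dn W psi pl pi pc.
have [|||u [lu [hu uu]]] := C n dn W psi.
- by move=> m H f a x y md; apply: pl; lia.
- by move=> m H f h v md; apply: pi; lia.
- by move=> m m' H H' Hmm f f' g v md m'd eh; apply: pc => //; lia.
have hu' m (H : m <= n) f v : m < n -> u (act V H f v) = psi m H f v.
  move=> mn; case: (leqP m d) => md; first exact: hu.
  apply: (colim_uniq HV (C m md) (L1 := fun v => u (act V H f v)) (L2 := psi m H f)).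
  - exact: lin_comp (actL HV H f) lu.
  - by move=> a x y; apply: pl.
  move=> m' H' f' v' m'd /=.
  have Hm'n : m' <= n by apply: leq_trans H.
  rewrite (actC HV H' H Hm'n) hu //; symmetry; apply: pc; try lia.
  by exists (gone S _); rewrite (stab_one HS) // (mulg1 HS).
exists u; split=> //; split=> //.
move=> u' lu' hu'' x; apply: uu => // m H f v md; rewrite hu'' //; lia.
Qed.

Lemma DtoC : condD d V -> condC d V.
Proof.
move=> D n; elim/ltn_ind: n => n IH dn W psi pl pi pc.
have pirr m (H H' : m <= n) f v : psi m H f v = psi m H' f v.
  by rewrite (eq_irrelevance H H').
have ex m (H : m <= n) (f : G n) : exists U : ev V m -> W, d < m -> m < n ->
    lin U /\ (forall m' (H' : m' <= m) f' v', m' <= d ->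
      U (act V H' f' v') = psi m' (leq_trans H' H) (gmul f (lift H f')) v').
  case: (boolP ((d < m) && (m < n))) => [/andP [dm mn]|nm]; last first.
    by exists (fun _ => 0%R) => dm mn; rewrite dm mn in nm.
  have [|||U [lU [hU _]]] := IH m mn dm W
      (fun m' H' f' v' => psi m' (leq_trans H' H) (gmul f (lift H f')) v').
  - by move=> m' H' f' a x y m'd; apply: pl.
  - move=> m' H' f' h v' m'd /=.
    have [h' ->] := cosetB HS H' H (leq_trans H' H) f' h.
    by rewrite (mulA HS) pi.
  - move=> m1 m2 H1 H2 Hmm f1 f2 g v m1d m2d [h eh] /=.
    apply: pc => //.
    have [h' e'] := cosetB HS H1 H (leq_trans H1 H) f1 h.
    exists h'; rewrite -(mulA HS) -(lift_lift HS H2 H (leq_trans H2 H)) -(lift_mul HS).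
    by rewrite eh e' (mulA HS).
  by exists U.
pose U m H f := proj1_sig (cid (ex m H f)).
have UP m H f : d < m -> m < n -> lin (U m H f) /\ (forall m' (H' : m' <= m) f' v', m' <= d ->
      U m H f (act V H' f' v') = psi m' (leq_trans H' H) (gmul f (lift H f')) v').
  by rewrite /U; case: (cid _).
pose psi' m H f v := if m <= d then psi m H f v else U m H f v.
have [|||u [lu [hu uu]]] := D n dn W psi'.
- move=> m H f a x y mn; rewrite /psi'; case: (leqP m d) => md; first exact: pl.
  by case: (UP m H f md mn) => l _; apply: l.
- move=> m H f h v mn; rewrite /psi'; case: (leqP m d) => md; first exact: pi.
  have [l1 h1] := UP m H (gmul f (stab H h)) md mn.
  have [l2 h2] := UP m H f md mn.
  apply: (colim_uniq HV (IH m mn md)) => // m' H' f' v' m'd.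
  rewrite h1 // h2 //.
  have [h' ->] := cosetA HS H' H (leq_trans H' H) f h f'.
  by rewrite pi.
- move=> m m' H H' Hmm f f' g v mn m'n [h eh]; rewrite /psi'.
  case: (leqP m' d) => m'd.
    have md : m <= d by apply: leq_trans m'd.
    by rewrite md; apply: pc => //; exists h.
  case: (leqP m d) => md.
    have [_ h1] := UP m' H' f' m'd m'n.
    by rewrite h1 // eh pirr pi.
  have [l1 h1] := UP m' H' f' m'd m'n.
  have [l2 h2] := UP m H f md mn.
  apply: (colim_uniq HV (IH m mn md) (L1 := fun v => U m' H' f' (act V Hmm g v))).
  + exact: lin_comp (actL HV Hmm g) l1.
  + exact: l2.
  move=> m'' H'' f'' v'' m''d /=.
  rewrite (actC HV H'' Hmm (leq_trans H'' Hmm)) h1 // h2 //.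
  rewrite (lift_mul HS) // (mulA HS) eh (lift_lift HS) //.
  have [h' ->] := cosetA HS H'' H (leq_trans H'' H) f h f''.
  by rewrite (pirr _ _ (leq_trans H'' H)) pi.
exists u; split=> //; split.
  by move=> m H f v md; rewrite hu /psi' ?md //; lia.
move=> u' lu' hu' x; apply: uu => // m H f v mn.
rewrite /psi'; case: (leqP m d) => md; first exact: hu'.
have [l2 h2] := UP m H f md mn.
apply: (colim_uniq HV (IH m mn md) (L1 := fun v => u' (act V H f v))).
- exact: lin_comp (actL HV H f) lu'.
- exact: l2.
move=> m' H' f' v' m'd /=.
by rewrite (actC HV H' H (leq_trans H' H)) hu' // h2.
Qed.

End WithD.
End Mods.

End Part4.
Import Part4.

Module Part5.


Section CoIndSec.
Context (S : GData) (HS : is_bstab S) (R : pzRingType).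
Local Notation G := (grp S).

Definition liftd m n (g : G m) : G n :=
  match Bool.bool_dec (m <= n) true with left H => lift H g | right _ => gone S n end.
Lemma liftdE m n (H : m <= n) g : liftd n g = lift H g.
Proof. rewrite /liftd; case: Bool.bool_dec => [H'|/(_ H)] //; by rewrite (eq_irrelevance H H'). Qed.

Definition actd (P : UGmod S R) k N (psi : G N) (p : ev P k) : ev P N :=
  match Bool.bool_dec (k <= N) true with left H => act P H psi p | right _ => 0%R end.
Lemma actdE (P : UGmod S R) k N (H : k <= N) psi p : actd psi p = act P H psi p.
Proof. rewrite /actd; case: Bool.bool_dec => [H'|/(_ H)] //; by rewrite (eq_irrelevance H H'). Qed.
Lemma actdN (P : UGmod S R) k N psi (p : ev P k) : ~~ (k <= N) -> actd psi p = 0%R :> ev P N.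
Proof. by rewrite /actd; case: Bool.bool_dec => // H; rewrite H. Qed.

Context (X : lmodType R) (N : nat).
Local Open Scope ring_scope.

Definition inv_pred k (phi : G N -> X) : Prop :=
  (forall (H : (k <= N)%N) f h, phi (gmul f (stab H h)) = phi f) /\
  ((N < k)%N -> forall f, phi f = 0).

Record ci (k : nat) := CI { cfun : G N -> X; cinv : inv_pred k cfun }.

Lemma ci_ext k (a b : ci k) : (forall f, cfun a f = cfun b f) -> a = b.
Proof.
case: a b => fa pa [fb pb] /= e; have ef : fa = fb by apply: funext.
subst fb; congr CI; exact: Prop_irrelevance.
Qed.

HB.instance Definition _ k := gen_eqMixin (ci k).
HB.instance Definition _ k := gen_choiceMixin (ci k).

Section Ops.
Context (k : nat).
Lemma inv_add (a b : ci k) : inv_pred k (fun f => cfun a f + cfun b f).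
Proof.
case: a b => fa [ia za] [fb [ib zb]]; split=> /=; first by move=> H f h; rewrite ia ib.
by move=> Nk f; rewrite za // zb // addr0.
Qed.
Lemma inv_opp (a : ci k) : inv_pred k (fun f => - cfun a f).
Proof.
case: a => fa [ia za]; split=> /=; first by move=> H f h; rewrite ia.
by move=> Nk f; rewrite za // oppr0.
Qed.
Lemma inv_zero : inv_pred k (fun f => 0).
Proof. by split. Qed.
Lemma inv_scale c (a : ci k) : inv_pred k (fun f => c *: cfun a f).
Proof.
case: a => fa [ia za]; split=> /=; first by move=> H f h; rewrite ia.
by move=> Nk f; rewrite za // scaler0.
Qed.
Definition cadd a b := CI (inv_add a b).
Definition copp a := CI (inv_opp a).
Definition czero := CI inv_zero.
Definition cscale c a := CI (inv_scale c a).
Lemma caddA : associative cadd.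
Proof. by move=> a b c; apply: ci_ext => f /=; rewrite addrA. Qed.
Lemma caddC : commutative cadd.
Proof. by move=> a b; apply: ci_ext => f /=; rewrite addrC. Qed.
Lemma cadd0 : left_id czero cadd.
Proof. by move=> a; apply: ci_ext => f /=; rewrite add0r. Qed.
Lemma caddN : left_inverse czero copp cadd.
Proof. by move=> a; apply: ci_ext => f /=; rewrite addNr. Qed.
HB.instance Definition _ := GRing.isZmodule.Build (ci k) caddA caddC cadd0 caddN.
Lemma cscaleA a b c : cscale a (cscale b c) = cscale (a * b) c.
Proof. by apply: ci_ext => f /=; rewrite scalerA. Qed.
Lemma cscale1 c : cscale 1 c = c.
Proof. by apply: ci_ext => f /=; rewrite scale1r. Qed.
Lemma cscaleDr a c1 c2 : cscale a (cadd c1 c2) = cadd (cscale a c1) (cscale a c2).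
Proof. by apply: ci_ext => f /=; rewrite scalerDr. Qed.
Lemma cscaleDl c a b : cscale (a + b) c = cadd (cscale a c) (cscale b c).
Proof. by apply: ci_ext => f /=; rewrite scalerDl. Qed.
HB.instance Definition _ := GRing.Zmodule_isLmodule.Build R (ci k)
  cscaleA cscale1 cscaleDr cscaleDl.
End Ops.

Lemma cfun_lin k a (x y : ci k) f : cfun (a *: x + y) f = a *: cfun x f + cfun y f.
Proof. by []. Qed.
Lemma cfun0 k f : cfun (0 : ci k) f = 0.
Proof. by []. Qed.

Section Act.
Context (k k' : nat) (H : (k <= k')%N) (g : G k') (a : ci k).
Lemma inv_act : inv_pred k'
  (fun psi => if (k' <= N)%N then cfun a (gmul psi (liftd N g)) else 0).
Proof.
split=> [Hk'N f h|]; last by move=> Nk f; case: leqP Nk => //; lia.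
rewrite Hk'N (liftdE Hk'N).
have [h' ->] := cosetA HS H Hk'N (leq_trans H Hk'N) f h g.
by case: (cinv a) => ia _; rewrite ia.
Qed.
Definition cact : ci k' := CI inv_act.
End Act.

Definition CoInd : UGmod S R := {| ev := fun k => ci k; act := cact |}.

Lemma CoInd_mod : is_UGmod CoInd.
Proof.
split; [|split; [|split]].
- move=> m n H f a u v; apply: ci_ext => psi /=.
  by case: ifP => _; rewrite ?scaler0 ?addr0.
- move=> m n H f h v; apply: ci_ext => psi /=.
  case: ifP => // nN; rewrite !(liftdE nN).
  have [h' ->] := cosetB HS H nN (leq_trans H nN) f h.
  by rewrite (mulA HS); case: (cinv v) => ia _; rewrite ia.
- move=> n H v; apply: ci_ext => psi /=.
  case: ifP => nN; first by rewrite (liftdE nN) (lift_one HS) (mulg1 HS).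
  by case: (cinv v) => _ zv; rewrite zv //; rewrite ltnNge nN.
- move=> k m n Hkm Hmn Hkn f g v; apply: ci_ext => psi /=.
  case: ifP => // nN; have mN := leq_trans Hmn nN.
  by rewrite mN !liftdE (lift_mul HS) (mulA HS) (lift_lift HS).
Qed.

Section Sharp.
Context (P : UGmod S R) (HP : is_UGmod P) (L : ev P N -> X) (hL : lin L).
Lemma inv_sharp k (p : ev P k) : inv_pred k (fun psi => L (actd psi p)).
Proof.
split=> [H f h|Nk f]; first by rewrite !(actdE H) (actI HP).
by rewrite actdN ?(lin0 hL) // -ltnNge.
Qed.
Definition sharp k p : ci k := CI (inv_sharp p).
Lemma sharp_hom : is_hom P CoInd sharp.
Proof.
split.
  move=> n a u v; apply: ci_ext => psi /=.
  case: (boolP (n <= N)%N) => nN; first by rewrite !(actdE nN) (actL HP) hL.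
  by rewrite !actdN // !(lin0 hL) scaler0 addr0.
move=> m n H f v; apply: ci_ext => psi /=.
case: (boolP (n <= N)%N) => nN.
  by rewrite (actdE nN) (actdE (leq_trans H nN)) (liftdE nN) (actC HP H nN (leq_trans H nN)).
by rewrite actdN // (lin0 hL).
Qed.
Lemma sharp_eval p : cfun (sharp p) (gone S N) = L p.
Proof. by rewrite /= (actdE (leqnn N)) (act1 HP). Qed.
End Sharp.

End CoIndSec.

End Part5.
Import Part5.

Module Part6.


Section Main.
Context (S : GData) (HS : is_bstab S) (R : pzRingType).
Local Notation G := (grp S).

Lemma free_uniq (P : UGmod S R) J (mj : J -> nat) (x : forall j, ev P (mj j)) :
  (forall W : UGmod S R, is_UGmod W ->
    forall w : forall j, ev W (mj j),
      exists t : forall n, ev P n -> ev W n,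
        is_hom P W t /\ (forall j, t (mj j) (x j) = w j) /\
        forall t' : forall n, ev P n -> ev W n,
          is_hom P W t' -> (forall j, t' (mj j) (x j) = w j) ->
          forall n p, t' n p = t n p) ->
  forall (W : UGmod S R) (HW : is_UGmod W) (t1 t2 : forall n, ev P n -> ev W n),
    is_hom P W t1 -> is_hom P W t2 -> (forall j, t1 (mj j) (x j) = t2 (mj j) (x j)) ->
    forall n p, t1 n p = t2 n p.
Proof.
move=> U W HW t1 t2 h1 h2 e n p.
have [t [_ [_ ut]]] := U W HW (fun j => t2 (mj j) (x j)).
by rewrite (ut t1 h1 e) (ut t2 h2 (fun j => erefl)).
Qed.

Lemma hom_lin (P W : UGmod S R) t (h : is_hom P W t) n : lin (t n).
Proof. by case: h => l _ a u v; apply: l. Qed.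
Lemma hom_nat (P W : UGmod S R) t (h : is_hom P W t) m n (H : m <= n) f v :
  t n (act P H f v) = act W H f (t m v).
Proof. by case: h => _ hn; apply: hn. Qed.

Lemma hom_comp (P Q W : UGmod S R) a b :
  is_hom P Q a -> is_hom Q W b -> is_hom P W (fun n p => b n (a n p)).
Proof.
move=> ha hb; split=> [n c u v|m n H f v]; first by rewrite (hom_lin ha) (hom_lin hb).
by rewrite (hom_nat ha) (hom_nat hb).
Qed.

Lemma hom_zero (P W : UGmod S R) (HW : is_UGmod W) :
  is_hom P W (fun n _ => 0%R).
Proof.
split=> [n c u v|m n H f v]; first by rewrite scaler0 addr0.
by rewrite (lin0 (actL HW H f)).
Qed.

Section WithV.
Context (V : UGmod S R) (HV : is_UGmod V) (d : nat).

Lemma BtoC : condB d V -> condC d V.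
Proof.
move=> B n dn W psi pl pi pc.
have pirr m (H H' : m <= n) f v : psi m H f v = psi m H' f v.
  by rewrite (eq_irrelevance H H').
pose psid m f v := match Bool.bool_dec (m <= n) true with
  left H => psi m H f v | right _ => 0%R end.
have psidE m (H : m <= n) f v : psid m f v = psi m H f v.
  rewrite /psid; case: Bool.bool_dec => [H'|/(_ H)] //; exact: pirr.
have inv_t k (v : ev V k) : @inv_pred S R W n k (fun f => if k <= d then psid k f v else 0%R).
  split=> [H f h|nk f]; last by case: leqP => // kd; lia.
  by case: ifP => // kd; rewrite !(psidE _ H) pi.
pose t k v : ev (CoInd HS W n) k := CI (inv_t k v).
have tE k (v : ev V k) f (H : k <= n) : k <= d -> cfun (t k v) f = psi k H f v.
  by move=> kd /=; rewrite kd (psidE _ H).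
have [|s [hs [st us]]] := B (CoInd HS W n) (CoInd_mod HS W n) t.
  split.
    move=> k kd a u v; apply: ci_ext => f.
    have kn : k <= n by lia.
    by rewrite cfun_lin !(tE _ _ _ kn) // pl.
  move=> m k H g v kd; apply: ci_ext => f /=.
  have kn : k <= n by lia.
  have md : m <= d by lia.
  rewrite kd kn md (liftdE kn) (psidE _ kn) (psidE _ (leq_trans H kn)).
  apply: pc => //.
  by exists (gone S _); rewrite (stab_one HS) (mulg1 HS).
exists (fun x => cfun (s n x) (gone S n)).
split; first by move=> a x y; rewrite (hom_lin hs) cfun_lin.
split.
  move=> m H f v md; rewrite (hom_nat hs) /= (leqnn n) (liftdE (leqnn n)).
  by rewrite (lift_id HS) (mul1g HS) st // (tE _ _ _ H).
move=> u' lu' hu' x.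
have hsh := sharp_hom HS HV lu'.
rewrite -(sharp_eval HV lu' x) (us _ hsh) //.
move=> k kd v; apply: ci_ext => f /=.
have kn : k <= n by lia.
by rewrite (actdE kn) hu' // kd (psidE _ kn).
Qed.


Lemma AtoB : condA d V -> condB d V.
Proof.
move=> [P0 [P1 [HP0 [HP1 [[J [mj [x [mjd U0]]]] [[J1 [mj1 [y [mj1d U1]]]]
        [al [be [hal [hbe [surj ex]]]]]]]]]]].
move=> W HW t [tl tn].
have tlin k : k <= d -> lin (t k) by move=> kd a u v; apply: tl.
have [T [hT [Tx uT]]] := U0 W HW (fun j => t (mj j) (be (mj j) (x j))).
have TD k (kd : k <= d) p : T k p = t k (be k p).
  pose L := fun p => (T k p - t k (be k p))%R.
  have lL : lin L.
    move=> a u v; rewrite /L (hom_lin hT) (hom_lin hbe) (tlin k kd).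
    by rewrite scalerBr opprD addrACA.
  have hsh := sharp_hom HS HP0 lL.
  have := free_uniq U0 (CoInd_mod HS (ev W k) k) hsh (hom_zero _ (CoInd_mod HS (ev W k) k)).
  move=> /(_ _ k p) h.
  have : L p = 0%R.
    rewrite -(sharp_eval HP0 lL p) h //.
    move=> j; apply: ci_ext => f /=.
    case: (boolP (mj j <= k)) => jk.
      rewrite (actdE jk) /L (hom_nat hT) (hom_nat hbe) tn // Tx subrr //.
    by rewrite actdN // (lin0 lL).
  by rewrite /L => /eqP; rewrite subr_eq0 => /eqP.
have hTal : is_hom P1 W (fun n q => T n (al n q)) := hom_comp hal hT.
have beal n q : be n (al n q) = 0%R by apply/(ex n); exists q.
have Tal n q : T n (al n q) = 0%R.
  apply: (free_uniq U1 HW hTal (hom_zero _ HW)) => i.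
  by rewrite TD // beal (lin0 (tlin _ (mj1d i))).
pose pre n v := proj1_sig (cid (surj n v)).
have preE n v : be n (pre n v) = v by rewrite /pre; case: (cid _).
pose s n v := T n (pre n v).
have sbe n p : s n (be n p) = T n p.
  have : be n (p - pre n (be n p))%R = 0%R by rewrite (linB (hom_lin hbe (n:=n))) preE subrr.
  move=> /(ex n) [q eq]; apply/eqP; rewrite eq_sym -subr_eq0 -(linB (hom_lin hT (n:=n))) -eq.
  by rewrite Tal.
exists s; split; [split|split].
- move=> n a u v; rewrite -{1}(preE n u) -{1}(preE n v) -(hom_lin hbe) sbe.
  by rewrite (hom_lin hT).
- move=> m n H f v; rewrite -{1}(preE m v) -(hom_nat hbe) sbe (hom_nat hT) //.
- by move=> n nd v; rewrite /s TD // preE.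
move=> s' hs' s'd n v.
have hs'b : is_hom P0 W (fun n p => s' n (be n p)) := hom_comp hbe hs'.
rewrite -(preE n v) sbe.
apply: (free_uniq U0 HW hs'b hT) => j.
by rewrite s'd // TD.
Qed.

End WithV.
End Main.

End Part6.
Import Part6.

Module Part7.


Section Free.
Context (S : GData) (HS : is_bstab S) (R : pzRingType).
Local Notation G := (grp S).

Definition same m k (g f : G k) : Prop := exists H : m <= k, exists h, g = gmul f (stab H h).

Lemma same_refl m k (H : m <= k) (f : G k) : same m f f.
Proof. by exists H, (gone S _); rewrite (stab_one HS) (mulg1 HS). Qed.
Lemma same_sym m k (g f : G k) : same m g f -> same m f g.
Proof.
move=> [H [h ->]]; exists H, (ginv h).
by rewrite -(mulA HS) -(stab_mul HS) (mulgV HS) (stab_one HS) (mulg1 HS).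
Qed.
Lemma same_trans m k (a b c : G k) : same m a b -> same m b c -> same m a c.
Proof.
move=> [H [h1 ->]] [H' [h2 ->]]; exists H', (gmul h2 h1).
by rewrite (stab_mul HS) (mulA HS) (eq_irrelevance H H').
Qed.

Definition rep m k (f : G k) : G k := epsilon (inhabits (gone S k)) (fun g => same m g f).

Lemma rep_same m k (H : m <= k) (f : G k) : same m (rep m f) f.
Proof. apply: (epsilon_spec (inhabits (gone S k)) (fun g => same m g f)); exists f; exact: same_refl. Qed.
Lemma rep_eq m k (f f' : G k) : same m f f' -> rep m f = rep m f'.
Proof.
move=> e; rewrite /rep; congr epsilon; apply: funext => g; apply: propext; split=> h.
  exact: same_trans h e.
by apply: same_trans h (same_sym e).
Qed.
Lemma rep_idem m k (H : m <= k) (f : G k) : rep m (rep m f) = rep m f.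
Proof. by apply: rep_eq; apply: rep_same. Qed.
Lemma rep_mm m (f : G m) : rep m f = f.
Proof.
have [H [h ->]] := rep_same (leqnn m) f.
by rewrite (stab_nn HS) (mulg1 HS).
Qed.

Context (J : Type) (mj : J -> nat).

Record key (k : nat) := Key {
  kj : J; kf : G k; kle : mj kj <= k; knorm : rep (mj kj) kf = kf }.

Lemma key_ext k (a b : key k) : kj a = kj b -> kf a = kf b -> a = b.
Proof.
case: a b => j f l n [j' f' l' n'] /= ej ef; subst j' f'.
by congr Key; apply: Prop_irrelevance.
Qed.

HB.instance Definition _ k := gen_eqMixin (key k).
HB.instance Definition _ k := gen_choiceMixin (key k).

Definition mkkey k j (f : G k) (H : mj j <= k) : key k :=
  @Key k j (rep (mj j) f) H (rep_idem H f).
Arguments mkkey {k} j f H.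

Lemma mkkey_eq k j (f f' : G k) H H' : same (mj j) f f' -> mkkey j f H = mkkey j f' H'.
Proof. by move=> e; apply: key_ext => //=; apply: rep_eq. Qed.
Lemma mkkey_norm k (t : key k) H : mkkey (kj t) (kf t) H = t.
Proof. by apply: key_ext => //=; rewrite knorm. Qed.

Definition FM k := FS (key k) R.

Definition fact k k' (H : k <= k') (g : G k') (p : FM k) : FM k' :=
  ext (fun t : key k => dlt (mkkey (kj t) (gmul g (lift H (kf t))) (leq_trans (kle t) H))) p.

Definition FreeM : UGmod S R := {| ev := FM; act := fact |}.

Lemma fact_lin k k' (H : k <= k') g : lin (fact H g).
Proof. by move=> a u v; apply: ext_lin. Qed.

Lemma FreeM_mod : is_UGmod FreeM.
Proof.
split; [|split; [|split]].
- by move=> m n H f a u v; apply: ext_lin.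
- move=> m n H f h v; rewrite /= /fact; congr ext; apply: funext => t; congr dlt.
  apply: mkkey_eq.
  have [h' ->] := cosetA HS (kle t) H (leq_trans (kle t) H) f h (kf t).
  by exists (leq_trans (kle t) H), h'.
- move=> n H v /=; apply: (FS_uniq (fact_lin H _)) => // t.
  rewrite /fact ext_dlt; congr dlt.
  rewrite -[RHS](mkkey_norm (kle t)); apply: mkkey_eq.
  rewrite (lift_id HS) (mul1g HS); exact: (same_refl (kle t) (kf t)).
- move=> k m n Hkm Hmn Hkn f g v /=.
  apply: (FS_uniq (L1 := fun v => fact Hmn f (fact Hkm g v))).
  + by move=> a x y; rewrite !fact_lin.
  + exact: fact_lin.
  move=> t; rewrite /fact !ext_dlt; congr dlt; apply: mkkey_eq => /=.
  have Hjm := leq_trans (kle t) Hkm.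
  have [H1 [h e]] := rep_same Hjm (gmul g (lift Hkm (kf t))).
  rewrite e.
  have [h' ->] := cosetB HS H1 Hmn (leq_trans (kle t) Hkn) (gmul g (lift Hkm (kf t))) h.
  rewrite (lift_mul HS) (lift_lift HS) (mulA HS) (mulA HS).
  by exists (leq_trans (kle t) Hkn), h'.
Qed.

Definition gen j : FM (mj j) := dlt (mkkey j (gone S (mj j)) (leqnn (mj j))).

Lemma fact_gen k j (H : mj j <= k) (f : G k) : fact H f (gen j) = dlt (mkkey j f H).
Proof.
rewrite /fact /gen ext_dlt /=; congr dlt; apply: mkkey_eq.
by rewrite rep_mm (lift_one HS) (mulg1 HS); exact: (same_refl H _).
Qed.

Lemma FreeM_univ : forall W : UGmod S R, is_UGmod W ->
    forall w : forall j, ev W (mj j),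
      exists t : forall n, ev FreeM n -> ev W n,
        is_hom FreeM W t /\ (forall j, t (mj j) (gen j) = w j) /\
        forall t' : forall n, ev FreeM n -> ev W n,
          is_hom FreeM W t' -> (forall j, t' (mj j) (gen j) = w j) ->
          forall n p, t' n p = t n p.
Proof.
move=> W HW w.
pose T k (p : FM k) := ext (fun t : key k => act W (kle t) (kf t) (w (kj t))) p.
have Tlin k : lin (T k) by move=> a u v; apply: ext_lin.
have Tdlt k (t : key k) : T k (dlt t) = act W (kle t) (kf t) (w (kj t)) by rewrite /T ext_dlt.
exists T; split; [split|split].
- by move=> n a u v; apply: Tlin.
- move=> m n H f v /=.
  apply: (FS_uniq (L1 := fun v => T n (fact H f v)) (L2 := fun v => act W H f (T m v))).
  + exact: lin_comp (fact_lin H f) (Tlin n).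
  + exact: lin_comp (Tlin m) (actL HW H f).
  move=> t /=; rewrite /fact ext_dlt Tdlt Tdlt /=.
  rewrite (actC HW (kle t) H (leq_trans (kle t) H)).
  have [H1 [h ->]] := rep_same (leq_trans (kle t) H) (gmul f (lift H (kf t))).
  by rewrite [LHS](act_irr _ H1) (actI HW); apply: act_irr.
- by move=> j; rewrite Tdlt /= rep_mm (act1 HW).
move=> t' ht' et' n p.
apply: (FS_uniq (hom_lin ht' (n:=n)) (Tlin n)) => t.
rewrite Tdlt -(mkkey_norm (kle t)) -fact_gen.
rewrite (hom_nat ht' (kle t) (kf t) (gen (kj t)) : t' n (act FreeM _ _ _) = _) et' /=.
by rewrite knorm.
Qed.

Lemma FreeM_free d : (forall j, mj j <= d) -> free_le d FreeM.
Proof. by move=> mjd; exists J, mj, gen; split=> //; apply: FreeM_univ. Qed.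

End Free.

End Part7.
Import Part7.

Module Part8.


Definition img_subm S R (P Q : UGmod S R) (f : forall n, ev P n -> ev Q n)
  (hf : is_hom P Q f) n : subm (ev Q n).
refine (@Subm _ _ (fun y => exists p, f n p = y) _ _).
- by exists 0%R; rewrite (lin0 (hom_lin hf (n:=n))).
- by move=> a x y [p <-] [q <-]; exists (a *: p + q)%R; rewrite (hom_lin hf).
Defined.

Section BA.
Context (S : GData) (HS : is_bstab S) (R : pzRingType) (V : UGmod S R)
  (HV : is_UGmod V) (d : nat).
Local Notation G := (grp S).

Lemma BtoA : condB d V -> condA d V.
Proof.
move=> B.
pose J0 := {m : nat & {v : ev V m | m <= d}}.
pose mj0 (j : J0) := projT1 j.
have mj0d : forall j, mj0 j <= d by case=> m [v h].
pose P0 := FreeM HS R mj0.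
have HP0 : is_UGmod P0 := FreeM_mod HS R mj0.
have [be [hbe [bex _]]] := FreeM_univ HS HV (fun j : J0 => proj1_sig (projT2 j)).
have surj : forall n v, exists p, be n p = v.
  move=> n v.
  pose Ms := img_subm hbe n.
  have lpi : lin (qpi Ms) by move=> a x y; apply: qpi_lin.
  have hsh := sharp_hom HS HV lpi.
  have HC := CoInd_mod HS (quot Ms) n.
  have [|s [hs [sd us]]] := B _ HC (fun k _ => 0%R).
    split => [k kd a u w|m k H f w kd]; first by rewrite scaler0 addr0.
    by rewrite (lin0 (actL HC H f)).
  have e1 := us _ hsh.
  have e0 := us _ (hom_zero _ HC) (fun k kd v => erefl).
  have : qpi Ms v = 0%R.
    rewrite -(sharp_eval HV lpi v) e1; last first.
      move=> k kd w; apply: ci_ext => f /=.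
      case: (boolP (k <= n)) => kn; last by rewrite actdN // (lin0 lpi).
      rewrite (actdE kn); apply/qpi0.
      exists (act P0 kn f (gen HS R mj0 (existT _ k (exist _ w kd)))).
      by rewrite (hom_nat hbe) (bex (existT _ k (exist _ w kd))).
    by rewrite -e0.
  by move/qpi0.
pose J1 := {m : nat & {p : ev P0 m | m <= d /\ be m p = 0%R}}.
pose mj1 (j : J1) := projT1 j.
have mj1d : forall j, mj1 j <= d by move=> [m [p hp]]; exact: (proj1 hp).
pose P1 := FreeM HS R mj1.
have HP1 : is_UGmod P1 := FreeM_mod HS R mj1.
have [al [hal [alx _]]] := FreeM_univ HS HP0 (fun j : J1 => proj1_sig (projT2 j)).
have beal : forall n q, be n (al n q) = 0%R.
  apply: (free_uniq (FreeM_univ HS (mj := mj1)) HV (hom_comp hal hbe) (hom_zero _ HV)).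
  by move=> j; rewrite alx; exact: (proj2 (proj2_sig (projT2 j))).
exists P0, P1; split=> //; split=> //; split; first exact: FreeM_free.
split; first exact: FreeM_free.
exists al, be; split=> //; split=> //; split=> // n p; split; last first.
  by move=> [q <-]; apply: beal.
move=> bp0.
pose Ms := img_subm hal n.
have lpi : lin (qpi Ms) by move=> a x y; apply: qpi_lin.
have hsh := sharp_hom HS HP0 lpi.
have HC := CoInd_mod HS (quot Ms) n.
have piA : forall k q, sharp HP0 lpi (al k q) = 0%R.
  move=> k q; apply: ci_ext => f /=.
  case: (boolP (k <= n)) => kn; last by rewrite actdN // (lin0 lpi).
  rewrite (actdE kn); apply/qpi0; exists (act P1 kn f q).
  by rewrite (hom_nat hal).
have ker : forall k (kd : k <= d) p, be k p = 0%R -> sharp HP0 lpi p = 0%R.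
  move=> k kd p' h.
  have := piA k (gen HS R mj1 (existT _ k (exist _ p' (conj kd h)))).
  by rewrite (alx (existT _ k (exist _ p' (conj kd h)))).
have ker' : forall k (kd : k <= d) p1 p2, be k p1 = be k p2 ->
    sharp HP0 lpi p1 = sharp HP0 lpi p2.
  move=> k kd p1 p2 e; apply/eqP; rewrite -subr_eq0 -(linB (hom_lin hsh (n:=k))).
  by apply/eqP/(ker k kd); rewrite (linB (hom_lin hbe (n:=k))) e subrr.
pose pre k v := proj1_sig (cid (surj k v)).
have preE k v : be k (pre k v) = v by rewrite /pre; case: (cid _).
pose t k v := sharp HP0 lpi (pre k v).
have [|s [hs [sd us]]] := B _ HC t.
  split => [k kd a u w|m k H f w kd].
    rewrite /t -(hom_lin hsh); apply: (ker' k kd).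
    by rewrite (hom_lin hbe) !preE.
  rewrite /t -(hom_nat hsh); apply: (ker' k kd).
  by rewrite (hom_nat hbe) !preE.
have sbe : forall k p, s k (be k p) = sharp HP0 lpi p.
  apply: (free_uniq (FreeM_univ HS (mj := mj0)) HC (hom_comp hbe hs) hsh) => j.
  rewrite bex sd // /t; apply: (ker' _ (mj0d j)).
  by rewrite preE bex.
have : qpi Ms p = 0%R.
  by rewrite -(sharp_eval HP0 lpi p) -sbe bp0 (lin0 (hom_lin hs (n:=n))).
by move/qpi0.
Qed.

End BA.

End Part8.
Import Part8.


Theorem proposition6p1 (S : GData) (HS : is_bstab S) (R : pzRingType) (d : nat)
  (V : UGmod S R) (HV : is_UGmod V) :
  (condA d V <-> condB d V) /\ (condA d V <-> condC d V) /\ (condA d V <-> condD d V).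
Proof.
have AB : condA d V -> condB d V by apply: AtoB.
have BA : condB d V -> condA d V by apply: BtoA.
have BC : condB d V -> condC d V by apply: BtoC.
have CB : condC d V -> condB d V by apply: CtoB.
have CD : condC d V -> condD d V by apply: CtoD.
have DC : condD d V -> condC d V by apply: DtoC.
split; [split=> //|split; split].
- by move=> /AB /BC.
- by move=> /CB /BA.
- by move=> /AB /BC /CD.
- by move=> /DC /CB /BA.
Qed.
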